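(* In the setting below, suppose $n\ge 3$ and let $p,q\in X$ with $S_p\cup S_q=E$ and $|S_p\cap S_q|=n-1$. Let $\{e_a\}=S_p\setminus S_q$, $\{e_b\}=S_q\setminus S_p$, and write $p=\sum_{e_i\in S_p}\lambda_ie_i$, $q=\sum_{e_i\in S_q}\theta_ie_i$ (normalized by the convention). Then $\lambda_a>1$, $\theta_b>1$, and $\lambda_a\theta_b\ge\lambda_a+\theta_b$.
   Context: Setting: $E=\{e_0,\dots,e_n\}\subset\mathbb R^n$ is the vertex set of an $n$-simplex with $e_0+\cdots+e_n=0$, and $X\subset\mathbb R^n\setminus\{0\}$ is a finite set with $E\subseteq X$, no element of $X$ a positive multiple of another, such that every $n+1$ points of $X$ are in good position. (A finite set $A$ is in conical position if $0\notin\operatorname{conv}A$ and no point of $A$ lies in the positive hull—set of nonnegative linear combinations—of the other points; it is in good position otherwise.) For $p\in X$, the support $S_p$ is the minimal subset of $E$ whose positive hull contains $p$; then $p=\sum_{e_i\in S_p}\lambda_ie_i$ uniquely with all $\lambda_i>0$. Convention: each $p\in X$ is replaced by the positive multiple for which $\min_{e_i\in S_p}\lambda_i=1$. *)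

(* Defs.v *)
From HB Require Import structures.
From mathcomp Require Import all_boot all_order all_algebra.
Set Implicit Arguments.
Unset Strict Implicit.
Unset Printing Implicit Defensive.
Import Order.TTheory GRing.Theory Num.Theory.
Local Open Scope ring_scope.

Section Defs.
Variables (R : realFieldType) (n : nat).

Definition affinely_independent (E : 'I_n.+1 -> 'rV[R]_n) : Prop :=
  forall c : 'I_n.+1 -> R, \sum_i c i = 0 -> \sum_i c i *: E i = 0 -> forall i, c i = 0.

(* For a finite family of distinct points f : 'I_m -> R^n (i.e. the set {f i}). *)
Definition zero_in_conv (m : nat) (f : 'I_m -> 'rV[R]_n) : Prop :=
  exists c : 'I_m -> R, (forall i, 0 <= c i) /\ \sum_i c i = 1 /\ \sum_i c i *: f i = 0.

Definition in_pos_hull_others (m : nat) (f : 'I_m -> 'rV[R]_n) (j : 'I_m) : Prop :=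
  exists c : 'I_m -> R, (forall i, 0 <= c i) /\ f j = \sum_(i | i != j) c i *: f i.

Definition conical_position (m : nat) (f : 'I_m -> 'rV[R]_n) : Prop :=
  ~ zero_in_conv f /\ forall j, ~ in_pos_hull_others f j.

Definition good_position (m : nat) (f : 'I_m -> 'rV[R]_n) : Prop :=
  ~ conical_position f.

Definition in_pos_hull_sub (E : 'I_n.+1 -> 'rV[R]_n) (S : {set 'I_n.+1}) (p : 'rV[R]_n) : Prop :=
  exists c : 'I_n.+1 -> R, (forall i, 0 <= c i) /\ p = \sum_(i in S) c i *: E i.

Definition is_support (E : 'I_n.+1 -> 'rV[R]_n) (S : {set 'I_n.+1}) (p : 'rV[R]_n) : Prop :=
  in_pos_hull_sub E S p /\ forall S' : {set 'I_n.+1}, S' \proper S -> ~ in_pos_hull_sub E S' p.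

Definition setting (E : 'I_n.+1 -> 'rV[R]_n) (X : seq 'rV[R]_n) : Prop :=
  [/\ affinely_independent E,
      \sum_i E i = 0,
      (forall i, E i \in X),
      0 \notin X
    & (forall x y, x \in X -> y \in X -> forall t : R, 0 < t -> y = t *: x -> y = x)] /\
  (forall f : 'I_n.+1 -> 'rV[R]_n, injective f -> (forall i, f i \in X) ->
         good_position f).

Definition normalized_coeffs (E : 'I_n.+1 -> 'rV[R]_n) (S : {set 'I_n.+1})
    (p : 'rV[R]_n) (lam : 'I_n.+1 -> R) : Prop :=
  [/\ p = \sum_(i in S) lam i *: E i,
      (forall i, i \in S -> 1 <= lam i)
    & exists2 i, i \in S & lam i = 1].

End Defs.

(* Main.v *)
Require Import Defs.
From HB Require Import structures.
From mathcomp Require Import all_boot all_order all_algebra.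
From mathcomp Require Import ring lra zify.
Import Order.TTheory GRing.Theory Num.Theory.
Local Open Scope ring_scope.

Lemma coef_const (R : realFieldType) (n : nat) (E : 'I_n.+1 -> 'rV[R]_n) :
  affinely_independent E -> \sum_i E i = 0 ->
  forall d : 'I_n.+1 -> R, \sum_k d k *: E k = 0 -> forall x y, d x = d y.
Proof.
move=> hA hS d hd x y.
set m := (\sum_k d k) / n.+1%:R.
have hn : n.+1%:R != 0 :> R by rewrite pnatr_eq0.
have := hA (fun k => d k - m).
have -> : \sum_k (d k - m) = 0.
  by rewrite sumrB sumr_const card_ord /m -(mulr_natr ((\sum_k d k) / _)) divfK // subrr.
have -> : \sum_k (d k - m) *: E k = 0.
  under eq_bigr do rewrite scalerBl.
  rewrite sumrB hd; have -> : \sum_i m *: E i = m *: \sum_i E i by rewrite scaler_sumr.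
  by rewrite hS scaler0 subrr.
move=> /(_ erefl erefl) h.
by move: (h x) (h y) => /eqP; rewrite subr_eq0 => /eqP -> /eqP; rewrite subr_eq0 => /eqP ->.
Qed.

Lemma expand_f (R : realFieldType) (n : nat) (E : 'I_n.+1 -> 'rV[R]_n)
  (p q : 'rV[R]_n) (Sp Sq : {set 'I_n.+1}) (lam theta : 'I_n.+1 -> R) (a b : 'I_n.+1)
  (g : 'I_n.+1 -> R) :
  a != b -> p = \sum_(i in Sp) lam i *: E i -> q = \sum_(i in Sq) theta i *: E i ->
  \sum_i g i *: (if i == a then p else if i == b then q else E i) =
  \sum_k (g a * (if k \in Sp then lam k else 0) + g b * (if k \in Sq then theta k else 0)
          + (if (k == a) || (k == b) then 0 else g k)) *: E k.
Proof.
move=> ab hp hq.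
have ba : b != a by rewrite eq_sym.
rewrite (bigD1 a) //= eqxx (bigD1 b) //= eqxx (negbTE ba).
under eq_bigr => i /andP[ia ib] do rewrite (negbTE ia) (negbTE ib).
under [RHS]eq_bigr do rewrite !scalerDl -!scalerA.
rewrite !big_split /= -!scaler_sumr hp hq addrA.
congr (_ + _ + _).
- by congr (_ *: _); rewrite big_mkcond; apply: eq_bigr => i _; case: ifP => //; rewrite scale0r.
- by congr (_ *: _); rewrite big_mkcond; apply: eq_bigr => i _; case: ifP => //; rewrite scale0r.
  rewrite [RHS](bigD1 a) //= (eqxx a) scale0r add0r (bigD1 b ba) /= (eqxx b) orbT scale0r add0r.
  by apply: eq_bigr => i /andP[ia ib]; rewrite (negbTE ia) (negbTE ib).
Qed.

Lemma aux (R : realFieldType) (ca cb ci li ti La Tb : R) :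
  0 <= ca -> 0 <= ci -> 1 <= Tb -> La*Tb < li*Tb + ti*La ->
  ca*li + cb*ti + ci = ca*La -> cb*Tb = ca*La -> [/\ ca = 0, cb = 0 & ci = 0].
Proof.
move=> h1 h2 h3 h4 e1 e2.
have E2 : ca * (li*Tb + ti*La - La*Tb) + ci * Tb =
   Tb * (ca*li + cb*ti + ci - ca*La) - ti * (cb*Tb - ca*La) by ring.
rewrite e1 e2 !subrr !mulr0 subrr in E2.
have ca0 : ca = 0 by nra.
have cb0 : cb = 0.
  by move: e2; rewrite ca0 mul0r => /eqP; rewrite mulf_eq0 => /orP[/eqP//|/eqP]; lra.
split => //; move: e1; rewrite ca0 cb0; lra.
Qed.

Arguments aux {R ca cb ci li ti La Tb}.

Ltac simp := repeat match goal with
  | H : is_true (?u != ?v) |- context[?u == ?v] => rewrite (negbTE H)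
  | H : is_true (?u != ?v) |- context[?v == ?u] => rewrite (eq_sym v u) (negbTE H)
  | |- context[?u == ?u] => rewrite eqxx
  end.

Theorem proposition6p7 (R : realFieldType) (n : nat)
    (E : 'I_n.+1 -> 'rV[R]_n) (X : seq 'rV[R]_n)
    (p q : 'rV[R]_n) (Sp Sq : {set 'I_n.+1}) (lam theta : 'I_n.+1 -> R)
    (a b : 'I_n.+1) :
  (3 <= n)%N ->
  setting E X ->
  p \in X -> q \in X ->
  is_support E Sp p -> is_support E Sq q ->
  normalized_coeffs E Sp p lam -> normalized_coeffs E Sq q theta ->
  Sp :|: Sq = [set: 'I_n.+1] ->
  #|Sp :&: Sq| = n.-1 ->
  Sp :\: Sq = [set a] -> Sq :\: Sp = [set b] ->
  [/\ 1 < lam a, 1 < theta b & lam a + theta b <= lam a * theta b].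
Proof.
move=> n3 [[hA hS hEX h0X hpos] hgood] pX qX _ _ [hp hlam1 _] [hq hth1 _] hU hI hDa hDb.
have /andP[aSq aSp] : (a \notin Sq) && (a \in Sp) by rewrite -in_setD hDa set11.
have /andP[bSp bSq] : (b \notin Sp) && (b \in Sq) by rewrite -in_setD hDb set11.
have ab : a != b by apply: contraNneq aSq => ->.
have hC : forall i, i != a -> i != b -> (i \in Sp) && (i \in Sq).
  move=> i ia ib.
  have : i \in Sp :|: Sq by rewrite hU inE.
  rewrite inE => /orP[iSp|iSq].
  - rewrite iSp /=; apply: contraNT ia => iSq.
    have : i \in Sp :\: Sq by rewrite inE iSq iSp.
    by rewrite hDa inE.
  - rewrite iSq andbT; apply: contraNT ib => iSp.
    have : i \in Sq :\: Sp by rewrite inE iSq iSp.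
    by rewrite hDb inE.
have La : 1 <= lam a := hlam1 a aSp.
have Tb : 1 <= theta b := hth1 b bSq.
pose D (g : 'I_n.+1 -> R) k := g a * (if k \in Sp then lam k else 0)
   + g b * (if k \in Sq then theta k else 0) + (if (k == a) || (k == b) then 0 else g k).
pose f i := if i == a then p else if i == b then q else E i.
have hconst : forall g, \sum_i g i *: f i = 0 -> forall x y, D g x = D g y.
  move=> g; rewrite /f (@expand_f _ _ E p q Sp Sq lam theta a b g ab hp hq); exact: coef_const.
have Da : forall g, D g a = g a * lam a.
  by move=> g; rewrite /D aSp (negbTE aSq) eqxx /=; ring.
have Db : forall g, D g b = g b * theta b.
  by move=> g; rewrite /D bSq (negbTE bSp) eqxx orbT /=; ring.
have Dc : forall g k, k != a -> k != b -> D g k = g a * lam k + g b * theta k + g k.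
  move=> g k ka kb; have /andP[kp kq] := hC k ka kb.
  by rewrite /D kp kq (negbTE ka) (negbTE kb).
have hother : forall j, exists i, [&& i != a, i != b & i != j].
  move=> j.
  have : (0 < #|(Sp :&: Sq) :\ j|)%N.
    have := cardsD1 j (Sp :&: Sq); rewrite hI.
    rewrite -subn1; case: (j \in _) => /= h; move: h n3; set k := #|_|; move=> h n3; lia.
  case/card_gt0P => i; rewrite !inE => /andP[ij /andP[iSp iSq]].
  exists i; rewrite ij andbT; apply/andP; split.
  - by apply: contraTneq iSq => ->.
  - by apply: contraTneq iSp => ->.
case: (boolP [exists i, [&& i != a, i != b &
      lam i * theta b + theta i * lam a <= lam a * theta b]]).
  move=> /existsP[i /and3P[ia ib hi]].
  have /andP[iSp iSq] := hC i ia ib.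
  have li := hlam1 i iSp; have ti := hth1 i iSq.
  have key : lam a + theta b <= lam a * theta b by nra.
  by split => //; nra.
rewrite negb_exists => /forallP hn.
have H : forall i, i != a -> i != b -> lam a * theta b < lam i * theta b + theta i * lam a.
  by move=> i ia ib; have := hn i; rewrite ia ib /= -ltNge.
exfalso.
have fX : forall i, f i \in X.
  by move=> i; rewrite /f; case: ifP => _ //; case: ifP => _ //.
have finj : injective f.
  move=> x y fxy; apply/eqP; apply/negPn/negP => xy.
  have yx : y != x by rewrite eq_sym.
  pose g i : R := if i == x then 1 else if i == y then -1 else 0.
  have gs : \sum_i g i *: f i = 0.
    rewrite (bigD1 x) //= (bigD1 y yx) /= big1 => [|i /andP[ix iy]]; last first.
      by rewrite /g (negbTE ix) (negbTE iy) scale0r.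
    by rewrite /g eqxx (negbTE yx) eqxx scale1r scaleN1r fxy addr0 subrr.
  have hk := hconst g gs.
  have hab := hk a b; rewrite Da Db /g in hab.
  case: (eqVneq x a) => [xa|xa].
    subst x; case: (eqVneq y b) => [yb|yb].
      by subst y; move: hab; simp; lra.
    by move: hab; simp; lra.
  case: (eqVneq x b) => [xb|xb].
    subst x; case: (eqVneq y a) => [ya|ya].
      by subst y; move: hab; simp; lra.
    by move: hab; simp; lra.
  have hxa := hk x a; rewrite Dc // Da /g in hxa.
  case: (eqVneq y a) => [ya|ya].
    by subst y; move: hab; simp; lra.
  case: (eqVneq y b) => [yb|yb].
    by subst y; move: hab; simp; lra.
  by move: hxa; simp; lra.
apply: (hgood f finj fX); split.
- move=> [c [c0 [c1 csum]]].
  have hk := hconst c csum.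
  have e1 : c b * theta b = c a * lam a by rewrite -Da -Db; apply: hk.
  have [i /and3P[ia ib _]] := hother a.
  have /andP[iSp iSq] := hC i ia ib.
  have [ca0 cb0 _] : [/\ c a = 0, c b = 0 & c i = 0].
    by apply: (aux (c0 a) (c0 i) Tb (H i ia ib)); [rewrite -Dc // -Da; apply: hk | exact: e1].
  have : \sum_i c i = 0.
    apply: big1 => k _.
    case: (eqVneq k a) => [->//|ka]; case: (eqVneq k b) => [->//|kb].
    have /andP[kSp kSq] := hC k ka kb.
    have [_ _ ->] : [/\ c a = 0, c b = 0 & c k = 0] => //.
    by apply: (aux (c0 a) (c0 k) Tb (H k ka kb)); [rewrite -Dc // -Da; apply: hk | exact: e1].
  by rewrite c1 => /eqP; rewrite oner_eq0.
- move=> j [c [c0 cj]].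
  pose g i := if i == j then -1 else c i.
  have gs : \sum_i g i *: f i = 0.
    rewrite (bigD1 j) //= /g eqxx scaleN1r cj.
    by rewrite [X in _ + X](eq_bigr (fun i => c i *: f i)) ?addNr // => i /negbTE ->.
  have hk := hconst g gs.
  case: (eqVneq j a) => [ja|ja].
    have := hk a b; rewrite Da Db /g -ja eqxx ja eq_sym (negbTE ab).
    have := c0 b; nra.
  case: (eqVneq j b) => [jb|jb].
    have := hk a b; rewrite Da Db /g -jb eqxx jb (negbTE ab).
    have := c0 a; nra.
  have [i /and3P[ia ib ij]] := hother j.
  have e1 : g b * theta b = g a * lam a by rewrite -Da -Db; apply: hk.
  have [ga0 gb0 _] : [/\ g a = 0, g b = 0 & g i = 0].
    apply: (aux _ _ Tb (H i ia ib)); [ | | rewrite -Dc // -Da; apply: hk | exact: e1].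
    + by rewrite /g eq_sym (negbTE ja).
    + by rewrite /g (negbTE ij).
  have := hk j a; rewrite Dc // Da ga0 gb0 /g eqxx; lra.
Qed.
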